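(* Let $C\subset\mathbb R^3$ be an embedded curve (closed or non-closed) with nowhere vanishing curvature, and let $F,G\in\mathcal D(|C|)$ be developable strips written in normal forms. Then $F(\Omega^+_\epsilon)\cap G(\Omega^-_\epsilon)=\emptyset$ for all sufficiently small $\epsilon>0$.
   Context: $C$ has length $l>0$ and an orientation; $-C$ is $C$ with opposite orientation. $J=[-l/2,l/2]$ if $C$ is non-closed and $J=\mathbb R/l\mathbb Z$ if $C$ is closed. $\Omega^+_\epsilon:=J\times(0,\epsilon)$, $\Omega^-_\epsilon:=J\times(-\epsilon,0)$. A developable strip along $C$ is the germ of a $C^\infty$ embedding $f(u,v)=f(u,0)+v\,\xi_f(u)$ with $\mathbf c_f(u)=f(u,0)$ parametrizing $C$, $\xi_f$ a unit vector field, and zero Gaussian curvature; with the Frenet frame $(\mathbf e,\mathbf n,\mathbf b)$ of $\mathbf c_f$ write $\xi_f=\cos\beta_f\,\mathbf e+\sin\beta_f(\cos\alpha_f\,\mathbf n+\sin\alpha_f\,\mathbf b)$. $\mathcal D(C)$: strips with $\mathbf c_f$ inducing the orientation of $C$ and $0<|\cos\alpha_f|<1$, normalized so $0<|\alpha_f|<\pi/2$, $0<\beta_f<\pi$ (hence $\xi_f\cdot\mathbf n>0$). $\mathcal D(|C|):=\mathcal D(C)\cup\mathcal D(-C)$. A normal form is such a strip $F(s,v)$ defined near $J\times\{0\}$ with $s\mapsto F(s,0)$ an arc-length parametrization of $C$ and $\partial_vF(s,0)=\xi_F(s)$. *)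

(* Defs.v *)
From Stdlib Require Import Reals Lra ZArith List.
From Coquelicot Require Import Coquelicot.
Open Scope R_scope.

Definition vec3 := (R * R * R)%type.
Definition mkv (a b c : R) : vec3 := (a, b, c).
Definition vx (p : vec3) : R := fst (fst p).
Definition vy (p : vec3) : R := snd (fst p).
Definition vz (p : vec3) : R := snd p.
Definition vzero : vec3 := mkv 0 0 0.
Definition vadd (p q : vec3) : vec3 := mkv (vx p + vx q) (vy p + vy q) (vz p + vz q).
Definition vscale (a : R) (p : vec3) : vec3 := mkv (a * vx p) (a * vy p) (a * vz p).
Definition vsub (p q : vec3) : vec3 := vadd p (vscale (-1) q).
Definition dot (p q : vec3) : R := vx p * vx q + vy p * vy q + vz p * vz q.
Definition cross (p q : vec3) : vec3 :=
  mkv (vy p * vz q - vz p * vy q) (vz p * vx q - vx p * vz q) (vx p * vy q - vy p * vx q).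
Definition vnorm (p : vec3) : R := sqrt (dot p p).

Definition Dv (f : R -> vec3) (t : R) : vec3 :=
  mkv (Derive (fun s => vx (f s)) t) (Derive (fun s => vy (f s)) t)
      (Derive (fun s => vz (f s)) t).
Definition pu (F : R -> R -> vec3) (u v : R) : vec3 := Dv (fun t => F t v) u.
Definition pv (F : R -> R -> vec3) (u v : R) : vec3 := Dv (fun t => F u t) v.

(** iterated partial derivatives of a scalar function of two variables;
    [true] = d/du, [false] = d/dv *)
Fixpoint pder (l : list bool) (g : R -> R -> R) : R -> R -> R :=
  match l with
  | nil => g
  | cons b l' =>
      if b then (fun u v => Derive (fun t => pder l' g t v) u)
      else (fun u v => Derive (fun t => pder l' g u t) v)
  end.

Definition smooth2_scalar (U : R -> R -> Prop) (g : R -> R -> R) : Prop :=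
  forall (l : list bool) (u v : R), U u v ->
    ex_derive (fun t => pder l g t v) u /\
    ex_derive (fun t => pder l g u t) v /\
    continuous (fun p : R * R => pder l g (fst p) (snd p)) (u, v).

Definition smooth2 (U : R -> R -> Prop) (F : R -> R -> vec3) : Prop :=
  smooth2_scalar U (fun u v => vx (F u v)) /\
  smooth2_scalar U (fun u v => vy (F u v)) /\
  smooth2_scalar U (fun u v => vz (F u v)).

Definition unit_normal (F : R -> R -> vec3) (u v : R) : vec3 :=
  let c := cross (pu F u v) (pv F u v) in vscale (/ vnorm c) c.
Definition gauss_curv (F : R -> R -> vec3) (u v : R) : R :=
  let nu := unit_normal F u v in
  let E := dot (pu F u v) (pu F u v) in
  let Ff := dot (pu F u v) (pv F u v) in
  let G := dot (pv F u v) (pv F u v) in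
  let L := dot (pu (pu F) u v) nu in
  let M := dot (pu (pv F) u v) nu in
  let N := dot (pv (pv F) u v) nu in
  (L * N - M ^ 2) / (E * G - Ff ^ 2).

Definition tang (c : R -> vec3) (s : R) : vec3 := vscale (/ vnorm (Dv c s)) (Dv c s).
Definition nrm (c : R -> vec3) (s : R) : vec3 :=
  vscale (/ vnorm (Dv (tang c) s)) (Dv (tang c) s).
Definition binrm (c : R -> vec3) (s : R) : vec3 := cross (tang c s) (nrm c s).
Definition curvature (c : R -> vec3) (s : R) : R :=
  vnorm (Dv (tang c) s) / vnorm (Dv c s).

(** * The parameter domain J: [-l/2, l/2] (non-closed) or R/lZ (closed,
    represented by l-periodic data on R) *)
Definition Jdom (closed : bool) (l s : R) : Prop :=
  if closed then True else - (l / 2) <= s <= l / 2.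

Definition same_J (closed : bool) (l u u' : R) : Prop :=
  if closed then exists k : Z, u' = u + IZR k * l else u' = u.
Definition near_J (closed : bool) (l u u' eps : R) : Prop :=
  if closed then exists k : Z, Rabs (u' - u - IZR k * l) < eps
  else Rabs (u' - u) < eps.

(** * The curve C, given by an arc-length parametrization gamma inducing its
    orientation; C = gamma(J), of length l. *)
Definition embedded_curve (closed : bool) (l : R) (gamma : R -> vec3) : Prop :=
  0 < l /\
  (forall (n : nat) (t : R),
      ex_derive_n (fun s => vx (gamma s)) n t /\
      ex_derive_n (fun s => vy (gamma s)) n t /\
      ex_derive_n (fun s => vz (gamma s)) n t) /\
  (forall t, vnorm (Dv gamma t) = 1) /\
  (if closed then
     (forall t, gamma (t + l) = gamma t) /\
     (forall s t, 0 <= s < l -> 0 <= t < l -> gamma s = gamma t -> s = t)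
   else
     (forall s t, Jdom closed l s -> Jdom closed l t -> gamma s = gamma t -> s = t)).

(** * Developable strips (germ along J x {0}): F(u,v) = F(u,0) + v xi(u),
    a smooth embedding of a neighbourhood of J x {0}, xi unit, K = 0. *)
Definition dev_strip (closed : bool) (l : R) (F : R -> R -> vec3) (xi : R -> vec3)
  : Prop :=
  exists eta delta : R, 0 < eta /\ 0 < delta /\
  let U := fun u v : R =>
     (if closed then True else - (l / 2) - eta < u < l / 2 + eta) /\
     - delta < v < delta in
  smooth2 U F /\
  (closed = true -> forall u v, F (u + l) v = F u v) /\
  (forall u v, U u v -> cross (pu F u v) (pv F u v) <> vzero) /\
  (forall u v u' v', U u v -> U u' v' -> F u v = F u' v' ->
      v' = v /\ same_J closed l u u') /\
  (forall u v, U u v -> forall eps, 0 < eps -> exists d, 0 < d /\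
      forall u' v', U u' v' -> vnorm (vsub (F u' v') (F u v)) < d ->
        Rabs (v' - v) < eps /\ near_J closed l u u' eps) /\
  (forall u v, U u v -> F u v = vadd (F u 0) (vscale v (xi u))) /\
  (forall u v, U u v -> vnorm (xi u) = 1) /\
  (forall u v, U u v -> gauss_curv F u v = 0).

(** * F is a normal form of an element of D(C) (o = 1) or D(-C) (o = -1):
    s |-> F(s,0) is an arc-length parametrization of C inducing the
    orientation of C (resp. -C), and
    xi = cos b e + sin b (cos a n + sin a b) with 0<|a|<pi/2, 0<b<pi. *)
Definition normal_form_D (closed : bool) (l : R) (gamma : R -> vec3) (o : R)
  (F : R -> R -> vec3) : Prop :=
  exists xi : R -> vec3,
    dev_strip closed l F xi /\
    (exists s0 : R, (closed = false -> s0 = 0) /\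
       forall s, Jdom closed l s -> F s 0 = gamma (s0 + o * s)) /\
    (let c := fun s => F s 0 in
     exists alpha beta : R -> R, forall s, Jdom closed l s ->
       xi s = vadd (vscale (cos (beta s)) (tang c s))
                   (vscale (sin (beta s))
                      (vadd (vscale (cos (alpha s)) (nrm c s))
                            (vscale (sin (alpha s)) (binrm c s)))) /\
       0 < Rabs (alpha s) < PI / 2 /\ 0 < beta s < PI).

Definition normal_form_Dabs (closed : bool) (l : R) (gamma : R -> vec3)
  (F : R -> R -> vec3) : Prop :=
  normal_form_D closed l gamma 1 F \/ normal_form_D closed l gamma (-1) F.

(* Main.v *)
Require Import Defs.
From Stdlib Require Import Reals Lra Classical ZArith Lia.
From Coquelicot Require Import Coquelicot.
Open Scope R_scope.

Lemma GL (lo hi : R) (P : R -> R -> Prop) :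
  (forall a r r', 0 < r' <= r -> P a r -> P a r') ->
  (forall a, lo <= a <= hi -> exists r, 0 < r /\ exists rho, 0 < rho /\
      forall a', lo <= a' <= hi -> Rabs (a' - a) < r -> P a' rho) ->
  exists rho, 0 < rho /\ forall a, lo <= a <= hi -> P a rho.
Proof.
  intros Hmon Hloc.
  destruct (Rlt_or_le hi lo) as [Hlt|Hle].
  { exists 1; split; [lra|]; intros a Ha; lra. }
  set (S := fun x => lo <= x <= hi /\ exists rho, 0 < rho /\ forall a, lo <= a <= x -> P a rho).
  assert (HS0 : S lo).
  { destruct (Hloc lo) as [r [Hr [rho [Hrho H]]]]; [lra|].
    split; [lra|]. exists rho; split; auto. intros a Ha. apply H; [lra|].
    replace (a - lo) with 0 by lra. rewrite Rabs_R0; lra. }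
  assert (Hb : bound S). { exists hi; intros x [Hx _]; lra. }
  destruct (completeness S Hb (ex_intro _ lo HS0)) as [sg [Hub Hlub]].
  assert (Hsg: lo <= sg <= hi).
  { split; [apply Hub; auto | apply Hlub; intros x [Hx _]; lra]. }
  destruct (Hloc sg Hsg) as [r [Hr [rs [Hrs Hs]]]].
  assert (Key : forall y, lo <= y <= hi -> y < sg + r ->
            exists rho, 0 < rho /\ forall a, lo <= a <= y -> P a rho).
  { intros y Hy Hyr.
    assert (Hex : exists x, S x /\ sg - r < x).
    { destruct (classic (exists x, S x /\ sg - r < x)) as [H|H]; auto.
      exfalso. assert (sg <= sg - r); [|lra].
      apply Hlub. intros x Hx. destruct (Rle_or_lt x (sg - r)); auto.
      exfalso; apply H; exists x; auto. }
    destruct Hex as [x [[Hx [rx [Hrx Hpx]]] Hxr]].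
    exists (Rmin rx rs). split; [apply Rmin_pos; auto|]. intros a Ha.
    destruct (Rle_or_lt a x).
    - apply Hmon with rx. split; [apply Rmin_pos; auto| apply Rmin_l]. apply Hpx; lra.
    - apply Hmon with rs. split; [apply Rmin_pos; auto| apply Rmin_r]. apply Hs; [lra|].
      unfold Rabs; destruct Rcase_abs; lra. }
  destruct (Rlt_or_le sg hi) as [Hl|Hl].
  - exfalso. set (y := Rmin hi (sg + r/2)).
    assert (Hy1 : y <= hi) by apply Rmin_l.
    assert (Hy2 : y <= sg + r/2) by apply Rmin_r.
    assert (Hy3 : sg < y) by (unfold y; apply Rmin_glb_lt; lra).
    assert (S y). { split; [lra|]. apply Key; lra. }
    assert (y <= sg) by (apply Hub; auto). lra.
  - apply Key; lra.
Qed.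


Lemma exd_cont (f : R -> R) x : ex_derive f x -> continuity_pt f x.
Proof. intros H. apply continuity_pt_filterlim. apply (ex_derive_continuous f x H). Qed.

Lemma cont_eps (f : R -> R) x : continuity_pt f x ->
  forall e, 0 < e -> exists d, 0 < d /\ forall y, Rabs (y - x) < d -> Rabs (f y - f x) < e.
Proof.
  intros H e He. destruct (H e He) as [d [Hd Hf]]. exists d; split; auto.
  intros y Hy. destruct (Req_dec y x) as [->|Hne].
  - rewrite Rminus_diag, Rabs_R0; auto.
  - apply (Hf y). split; [split; [exact I| auto] | exact Hy].
Qed.

Lemma mvt_bound (f : R -> R) a b M :
  (forall x, Rmin a b <= x <= Rmax a b -> ex_derive f x /\ Rabs (Derive f x) <= M) ->
  Rabs (f a - f b) <= M * Rabs (a - b).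
Proof.
  intros H.
  destruct (MVT_gen f b a (Derive f)) as [c [Hc Heq]].
  - intros x Hx. apply Derive_correct. apply H. rewrite Rmin_comm, Rmax_comm in Hx. lra.
  - intros x Hx. apply exd_cont. apply H. rewrite Rmin_comm, Rmax_comm in Hx. lra.
  - rewrite Heq, Rabs_mult. apply Rmult_le_compat_r; [apply Rabs_pos|].
    apply H. rewrite Rmin_comm, Rmax_comm. lra.
Qed.

Lemma taylor1 (f : R -> R) a b M :
  (forall x, Rmin a b <= x <= Rmax a b -> ex_derive f x /\ ex_derive (Derive f) x /\
      Rabs (Derive (Derive f) x) <= M) ->
  Rabs (f a - f b - (a - b) * Derive f b) <= M * (a - b) ^ 2.
Proof.
  intros H.
  set (K := Derive f b).
  set (h := fun x => f x - x * K).
  destruct (MVT_gen h b a (fun x => Derive f x - K)) as [c [Hc Heq]].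
  - intros x Hx. unfold h.
    assert (ex_derive f x) by (apply H; rewrite Rmin_comm, Rmax_comm in Hx; lra).
    auto_derive; auto. change (Derive (fun x0 => f x0) x) with (Derive f x). ring.
  - intros x Hx. apply exd_cont. unfold h.
    assert (ex_derive f x) by (apply H; rewrite Rmin_comm, Rmax_comm in Hx; lra).
    auto_derive; auto.
  - rewrite Rmin_comm, Rmax_comm in Hc.
    assert (Hb : Rabs (Derive f c - Derive f b) <= M * Rabs (c - b)).
    { apply mvt_bound. intros x Hx. apply H.
      split.
      + apply Rle_trans with (Rmin c b); [|apply Hx].
        apply Rmin_glb; [lra| apply Rmin_r].
      + apply Rle_trans with (Rmax c b); [apply Hx|].
        apply Rmax_lub; [lra| apply Rmax_r]. }
    assert (Hcb : Rabs (c - b) <= Rabs (a - b)).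
    { unfold Rmin, Rmax in Hc. destruct Rle_dec; unfold Rabs; repeat destruct Rcase_abs; lra. }
    unfold h in Heq.
    replace (f a - f b - (a - b) * K) with ((Derive f c - K) * (a - b)) by (unfold K in *; lra).
    rewrite Rabs_mult. unfold K.
    assert (HM : 0 <= M).
    { apply Rle_trans with (Rabs (Derive (Derive f) a)); [apply Rabs_pos|]. apply H.
      unfold Rmin, Rmax; destruct Rle_dec; lra. }
    replace ((a - b) ^ 2) with (Rabs (a - b) * Rabs (a - b)).
    2:{ rewrite <- (pow2_abs (a - b)). ring. }
    apply Rle_trans with (M * Rabs (c - b) * Rabs (a - b)).
    + apply Rmult_le_compat_r; [apply Rabs_pos| exact Hb].
    + rewrite Rmult_assoc. apply Rmult_le_compat_l; auto.
      apply Rmult_le_compat_r; [apply Rabs_pos| exact Hcb].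
Qed.

Lemma DL (D : R -> Prop) f g y r :
  ex_derive f y -> ex_derive g y -> 0 < r ->
  (forall x, D x -> Rabs (x - y) < r -> f x = g x) -> D y ->
  (forall e, 0 < e -> exists x, D x /\ x <> y /\ Rabs (x - y) < e) ->
  Derive f y = Derive g y.
Proof.
  intros Hf Hg Hr Heq Dy Hacc.
  pose proof (proj1 (is_derive_Reals _ _ _) (Derive_correct f y Hf)) as Lf.
  pose proof (proj1 (is_derive_Reals _ _ _) (Derive_correct g y Hg)) as Lg.
  destruct (Req_dec (Derive f y) (Derive g y)) as [E|NE]; auto. exfalso.
  set (e := Rabs (Derive f y - Derive g y) / 2).
  assert (He : 0 < e) by (unfold e; apply Rlt_mult_inv_pos; [apply Rabs_pos_lt; lra| lra]).
  destruct (Lf e He) as [d1 Hd1]. destruct (Lg e He) as [d2 Hd2].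
  destruct (Hacc (Rmin r (Rmin d1 d2))) as [x [Dx [Hxy Hxd]]].
  { apply Rmin_pos; auto. apply Rmin_pos; [apply (cond_pos d1)|apply (cond_pos d2)]. }
  assert (h0 : x - y <> 0) by lra.
  assert (Ha : Rabs (x - y) < d1). { eapply Rlt_le_trans; [apply Hxd|]. 
    eapply Rle_trans; [apply Rmin_r| apply Rmin_l]. }
  assert (Hb : Rabs (x - y) < d2). { eapply Rlt_le_trans; [apply Hxd|]. 
    eapply Rle_trans; [apply Rmin_r| apply Rmin_r]. }
  assert (Hc : Rabs (x - y) < r). { eapply Rlt_le_trans; [apply Hxd| apply Rmin_l]. }
  specialize (Hd1 (x - y) h0 Ha). specialize (Hd2 (x - y) h0 Hb).
  replace (y + (x - y)) with x in * by ring.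
  rewrite (Heq x Dx Hc) in Hd1.
  rewrite (Heq y Dy) in Hd1 by (rewrite Rminus_diag, Rabs_R0; auto).
  set (q := (g x - g y) / (x - y)) in *.
  assert (Rabs (Derive f y - Derive g y) <= Rabs (q - Derive f y) + Rabs (q - Derive g y)).
  { replace (Derive f y - Derive g y) with (-(q - Derive f y) + (q - Derive g y)) by ring.
    eapply Rle_trans; [apply Rabs_triang|]. rewrite Rabs_Ropp; lra. }
  unfold e in *. lra.
Qed.

Lemma Derive_periodic (f : R -> R) (l : R) :
  (forall x, f (x + l) = f x) -> forall x, Derive f (x + l) = Derive f x.
Proof.
  intros H x. unfold Derive. f_equal. apply Lim_ext. intros h.
  replace (x + l + h) with ((x + h) + l) by ring. rewrite !H. reflexivity.
Qed.

Lemma periodic_Z (f : R -> R) (l : R) :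
  (forall x, f (x + l) = f x) -> forall (k : Z) x, f (x + IZR k * l) = f x.
Proof.
  intros H.
  assert (Hn : forall n x, f (x + INR n * l) = f x).
  { induction n; intros x.
    - simpl. rewrite Rmult_0_l, Rplus_0_r. auto.
    - rewrite S_INR. replace (x + (INR n + 1) * l) with ((x + INR n * l) + l) by ring.
      rewrite H. auto. }
  intros k x. destruct (Z_le_gt_dec 0 k) as [Hk|Hk].
  - rewrite <- (Z2Nat.id k Hk). rewrite <- INR_IZR_INZ. apply Hn.
  - replace k with (- Z.of_nat (Z.to_nat (- k)))%Z by lia.
    rewrite opp_IZR, <- INR_IZR_INZ.
    rewrite <- (Hn (Z.to_nat (-k)) (x + - INR (Z.to_nat (- k)) * l)).
    f_equal; ring.
Qed.

Lemma floor_rep (x l : R) : 0 < l -> exists k : Z, 0 <= x - IZR k * l < l.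
Proof.
  intros Hl. destruct (archimed (x / l)) as [H1 H2].
  exists (up (x / l) - 1)%Z. rewrite minus_IZR.
  assert (x = (x / l) * l) by (field; lra).
  split; nra.
Qed.


Lemma vec_eq (p q : vec3) : vx p = vx q -> vy p = vy q -> vz p = vz q -> p = q.
Proof. destruct p as [[a b] c], q as [[d e] f]. unfold vx, vy, vz; simpl. intros; subst; auto. Qed.

Lemma dot_pos p : 0 <= dot p p.
Proof. unfold dot. nra. Qed.

Lemma vnorm_pos p : 0 <= vnorm p.
Proof. apply sqrt_pos. Qed.

Lemma vnorm_sq p : vnorm p * vnorm p = dot p p.
Proof. apply sqrt_sqrt, dot_pos. Qed.

Lemma CS p q : Rabs (dot p q) <= vnorm p * vnorm q.
Proof.
  assert (H : (dot p q) ^ 2 <= dot p p * dot q q).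
  { assert (E : dot p p * dot q q - (dot p q) ^ 2 =
      (vx p * vy q - vy p * vx q) ^ 2 + (vx p * vz q - vz p * vx q) ^ 2 + (vy p * vz q - vz p * vy q) ^ 2)
      by (unfold dot; ring).
    assert (0 <= (vx p * vy q - vy p * vx q) ^ 2 + (vx p * vz q - vz p * vx q) ^ 2 + (vy p * vz q - vz p * vy q) ^ 2) by (repeat apply Rplus_le_le_0_compat; apply pow2_ge_0).
    lra. }
  rewrite <- (sqrt_pow2 (Rabs (dot p q))) by apply Rabs_pos.
  unfold vnorm. rewrite <- sqrt_mult by apply dot_pos.
  apply sqrt_le_1_alt. rewrite pow2_abs. auto.
Qed.

Lemma comp_le_norm p : Rabs (vx p) <= vnorm p /\ Rabs (vy p) <= vnorm p /\ Rabs (vz p) <= vnorm p.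
Proof.
  unfold vnorm, dot.
  repeat split; rewrite <- sqrt_Rsqr_abs; apply sqrt_le_1_alt; unfold Rsqr; nra.
Qed.

Lemma norm_le_sum p : vnorm p <= Rabs (vx p) + Rabs (vy p) + Rabs (vz p).
Proof.
  unfold vnorm, dot.
  rewrite <- (sqrt_pow2 (Rabs (vx p) + Rabs (vy p) + Rabs (vz p))).
  2:{ pose proof (Rabs_pos (vx p)); pose proof (Rabs_pos (vy p)); pose proof (Rabs_pos (vz p)); lra. }
  apply sqrt_le_1_alt.
  pose proof (Rabs_pos (vx p)); pose proof (Rabs_pos (vy p)); pose proof (Rabs_pos (vz p)).
  assert (E1: vx p * vx p = Rabs (vx p) * Rabs (vx p)) by (rewrite <- Rabs_mult; rewrite Rabs_pos_eq; nra).
  assert (E2: vy p * vy p = Rabs (vy p) * Rabs (vy p)) by (rewrite <- Rabs_mult; rewrite Rabs_pos_eq; nra).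
  assert (E3: vz p * vz p = Rabs (vz p) * Rabs (vz p)) by (rewrite <- Rabs_mult; rewrite Rabs_pos_eq; nra).
  rewrite E1, E2, E3. nra.
Qed.

Lemma vnorm_zero p : vnorm p = 0 -> p = vzero.
Proof.
  intros H. pose proof (vnorm_sq p). rewrite H in H0.
  unfold dot in H0. apply vec_eq; unfold vzero, mkv, vx, vy, vz in *; simpl in *; nra.
Qed.

Lemma triang p q : vnorm (vadd p q) <= vnorm p + vnorm q.
Proof.
  pose proof (CS p q). pose proof (vnorm_sq p). pose proof (vnorm_sq q).
  pose proof (vnorm_sq (vadd p q)). pose proof (vnorm_pos p). pose proof (vnorm_pos q).
  pose proof (vnorm_pos (vadd p q)).
  assert (dot (vadd p q) (vadd p q) = dot p p + 2 * dot p q + dot q q)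
    by (unfold dot, vadd, mkv, vx, vy, vz; simpl; ring).
  assert (dot p q <= Rabs (dot p q)) by apply Rle_abs.
  nra.
Qed.

Lemma unit_dot p : vnorm p = 1 -> dot p p = 1.
Proof. intros H. rewrite <- vnorm_sq, H. ring. Qed.

Lemma unit_comp p : vnorm p = 1 -> Rabs (vx p) <= 1 /\ Rabs (vy p) <= 1 /\ Rabs (vz p) <= 1.
Proof. intros H. rewrite <- H. apply comp_le_norm. Qed.

Lemma vnorm_scale k p : vnorm (vscale k p) = Rabs k * vnorm p.
Proof.
  unfold vnorm. rewrite <- sqrt_Rsqr_abs. rewrite <- sqrt_mult.
  - f_equal. unfold dot, vscale, mkv, vx, vy, vz, Rsqr; simpl. ring.
  - apply Rle_0_sqr.
  - apply dot_pos.
Qed.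


Definition smooth1 (f : R -> R) := forall n t, ex_derive_n f n t.

Lemma smooth1_d1 f : smooth1 f -> forall t, ex_derive f t.
Proof. intros H t. exact (H 1%nat t). Qed.
Lemma smooth1_d2 f : smooth1 f -> forall t, ex_derive (Derive f) t.
Proof. intros H t. exact (H 2%nat t). Qed.
Lemma smooth1_d3 f : smooth1 f -> forall t, ex_derive (Derive (Derive f)) t.
Proof. intros H t. exact (H 3%nat t). Qed.

Lemma emb_smooth closed l gamma : embedded_curve closed l gamma ->
  smooth1 (fun s => vx (gamma s)) /\ smooth1 (fun s => vy (gamma s)) /\ smooth1 (fun s => vz (gamma s)).
Proof. intros [_ [H _]]. repeat split; intros n t; apply H. Qed.

Lemma Jdom_conv closed l a b x : Jdom closed l a -> Jdom closed l b ->
  Rmin a b <= x <= Rmax a b -> Jdom closed l x.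
Proof.
  destruct closed; simpl; auto. unfold Rmin, Rmax. destruct Rle_dec; lra.
Qed.

Lemma unit_g1 closed l gamma : embedded_curve closed l gamma ->
  forall t, dot (Dv gamma t) (Dv gamma t) = 1.
Proof. intros [_ [_ [H _]]] t. apply unit_dot, H. Qed.

Lemma orth_g12 closed l gamma : embedded_curve closed l gamma ->
  forall t, dot (Dv gamma t) (Dv (Dv gamma) t) = 0.
Proof.
  intros He t. destruct (emb_smooth _ _ _ He) as [Sx [Sy Sz]].
  pose proof (smooth1_d2 _ Sx t) as Dx. pose proof (smooth1_d2 _ Sy t) as Dy.
  pose proof (smooth1_d2 _ Sz t) as Dz.
  set (x1 := Derive (fun s => vx (gamma s))) in *.
  set (y1 := Derive (fun s => vy (gamma s))) in *.
  set (z1 := Derive (fun s => vz (gamma s))) in *.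
  assert (H1 : is_derive (fun s => x1 s * x1 s + y1 s * y1 s + z1 s * z1 s) t
     (2 * (x1 t * Derive x1 t + y1 t * Derive y1 t + z1 t * Derive z1 t))).
  { auto_derive; [repeat split; auto|].
    change (fun x => x1 x) with x1; change (fun x => y1 x) with y1; change (fun x => z1 x) with z1. ring. }
  assert (H2 : is_derive (fun s => x1 s * x1 s + y1 s * y1 s + z1 s * z1 s) t 0).
  { apply is_derive_ext with (fun _ => 1).
    - intros s. symmetry. apply (unit_g1 _ _ _ He s).
    - auto_derive; auto. }
  pose proof (is_derive_unique _ _ _ H1) as U1. pose proof (is_derive_unique _ _ _ H2) as U2.
  rewrite U1 in U2. change (dot (Dv gamma t) (Dv (Dv gamma) t)) with (x1 t * Derive x1 t + y1 t * Derive y1 t + z1 t * Derive z1 t). lra.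
Qed.


Lemma vsub_x p q : vx (vsub p q) = vx p - vx q.
Proof. unfold vsub, vadd, vscale, mkv, vx; simpl. ring. Qed.
Lemma vsub_y p q : vy (vsub p q) = vy p - vy q.
Proof. unfold vsub, vadd, vscale, mkv, vy; simpl. ring. Qed.
Lemma vsub_z p q : vz (vsub p q) = vz p - vz q.
Proof. unfold vsub, vadd, vscale, mkv, vz; simpl. ring. Qed.

Lemma per_vec (h : R -> vec3) l : (forall t, h (t + l) = h t) ->
  forall k t, h (t + IZR k * l) = h t.
Proof.
  intros H k t. apply vec_eq.
  - apply (periodic_Z (fun s => vx (h s)) l). intros x; rewrite H; auto.
  - apply (periodic_Z (fun s => vy (h s)) l). intros x; rewrite H; auto.
  - apply (periodic_Z (fun s => vz (h s)) l). intros x; rewrite H; auto.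
Qed.

Lemma per_Dv (h : R -> vec3) l : (forall t, h (t + l) = h t) ->
  forall t, Dv h (t + l) = Dv h t.
Proof.
  intros H t. unfold Dv. f_equal; apply (Derive_periodic _ l); intros x; rewrite H; auto.
Qed.

Lemma cont_abs3 f g h x : continuity_pt f x -> continuity_pt g x -> continuity_pt h x ->
  continuity_pt (fun x => Rabs (f x) + Rabs (g x) + Rabs (h x)) x.
Proof.
  intros Hf Hg Hh.
  assert (A : forall k, continuity_pt k x -> continuity_pt (fun x => Rabs (k x)) x).
  { intros k Hk. exact (continuity_pt_comp k Rabs x Hk (Rcontinuity_abs _)). }
  exact (continuity_pt_plus _ _ x (continuity_pt_plus _ _ x (A f Hf) (A g Hg)) (A h Hh)).
Qed.

Lemma cont_bound (phi : R -> R) lo hi : (forall x, continuity_pt phi x) ->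
  exists M, forall x, lo <= x <= hi -> phi x <= M.
Proof.
  intros Hc. destruct (Rle_or_lt lo hi) as [Hle|Hlt].
  - destruct (continuity_ab_maj phi lo hi Hle (fun c _ => Hc c)) as [Mx [H1 H2]].
    exists (phi Mx); auto.
  - exists 0. intros; lra.
Qed.

Lemma lip_g closed l gamma : embedded_curve closed l gamma ->
  forall a b, vnorm (vsub (gamma a) (gamma b)) <= 3 * Rabs (a - b).
Proof.
  intros He a b. destruct (emb_smooth _ _ _ He) as [Sx [Sy Sz]].
  destruct He as [_ [_ [Hu _]]].
  eapply Rle_trans; [apply norm_le_sum|]. rewrite vsub_x, vsub_y, vsub_z.
  assert (Hx : Rabs (vx (gamma a) - vx (gamma b)) <= 1 * Rabs (a - b)).
  { apply (mvt_bound (fun s => vx (gamma s))). intros x _. split; [apply smooth1_d1; auto|].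
    apply (unit_comp _ (Hu x)). }
  assert (Hy : Rabs (vy (gamma a) - vy (gamma b)) <= 1 * Rabs (a - b)).
  { apply (mvt_bound (fun s => vy (gamma s))). intros x _. split; [apply smooth1_d1; auto|].
    apply (unit_comp _ (Hu x)). }
  assert (Hz : Rabs (vz (gamma a) - vz (gamma b)) <= 1 * Rabs (a - b)).
  { apply (mvt_bound (fun s => vz (gamma s))). intros x _. split; [apply smooth1_d1; auto|].
    apply (unit_comp _ (Hu x)). }
  lra.
Qed.

Lemma g2_bound closed l gamma : embedded_curve closed l gamma ->
  exists M, 1 <= M /\ forall x, Jdom closed l x ->
    Rabs (vx (Dv (Dv gamma) x)) <= M /\ Rabs (vy (Dv (Dv gamma) x)) <= M /\
    Rabs (vz (Dv (Dv gamma) x)) <= M.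
Proof.
  intros He. destruct (emb_smooth _ _ _ He) as [Sx [Sy Sz]].
  set (phi := fun x => Rabs (vx (Dv (Dv gamma) x)) + Rabs (vy (Dv (Dv gamma) x)) + Rabs (vz (Dv (Dv gamma) x))).
  assert (Hc : forall x, continuity_pt phi x).
  { intros x. apply cont_abs3; apply exd_cont; [apply (smooth1_d3 _ Sx)|apply (smooth1_d3 _ Sy)|apply (smooth1_d3 _ Sz)]. }
  assert (Hph : forall x, Rabs (vx (Dv (Dv gamma) x)) <= phi x /\ Rabs (vy (Dv (Dv gamma) x)) <= phi x /\
    Rabs (vz (Dv (Dv gamma) x)) <= phi x).
  { intros x; unfold phi. pose proof (Rabs_pos (vx (Dv (Dv gamma) x))).
    pose proof (Rabs_pos (vy (Dv (Dv gamma) x))). pose proof (Rabs_pos (vz (Dv (Dv gamma) x))). lra. }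
  destruct closed.
  - destruct (cont_bound phi 0 l Hc) as [M HM].
    exists (Rmax 1 M). split; [apply Rmax_l|]. intros x _.
    destruct He as [Hl [_ [_ [Hp _]]]].
    destruct (floor_rep x l Hl) as [k Hk].
    assert (E : Dv (Dv gamma) x = Dv (Dv gamma) (x - IZR k * l)).
    { replace x with ((x - IZR k * l) + IZR k * l) at 1 by ring.
      apply per_vec. intros t. apply per_Dv. intros t'. apply per_Dv. auto. }
    rewrite E. pose proof (HM (x - IZR k * l) ltac:(lra)). pose proof (Rmax_r 1 M).
    destruct (Hph (x - IZR k * l)) as [? [? ?]]. repeat split; lra.
  - destruct (cont_bound phi (-(l/2)) (l/2) Hc) as [M HM].
    exists (Rmax 1 M). split; [apply Rmax_l|]. intros x Hx. simpl in Hx.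
    pose proof (HM x Hx). pose proof (Rmax_r 1 M).
    destruct (Hph x) as [? [? ?]]. repeat split; lra.
Qed.

Lemma taylor_g closed l gamma M : embedded_curve closed l gamma ->
  (forall x, Jdom closed l x ->
    Rabs (vx (Dv (Dv gamma) x)) <= M /\ Rabs (vy (Dv (Dv gamma) x)) <= M /\
    Rabs (vz (Dv (Dv gamma) x)) <= M) ->
  forall a b, Jdom closed l a -> Jdom closed l b ->
   Rabs (vx (gamma a) - vx (gamma b) - (a - b) * vx (Dv gamma b)) <= M * (a - b) ^ 2 /\
   Rabs (vy (gamma a) - vy (gamma b) - (a - b) * vy (Dv gamma b)) <= M * (a - b) ^ 2 /\
   Rabs (vz (gamma a) - vz (gamma b) - (a - b) * vz (Dv gamma b)) <= M * (a - b) ^ 2.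
Proof.
  intros He HM a b Ha Hb. destruct (emb_smooth _ _ _ He) as [Sx [Sy Sz]].
  repeat split.
  - apply (taylor1 (fun s => vx (gamma s))). intros x Hx.
    split; [apply smooth1_d1; auto|]. split; [apply smooth1_d2; auto|].
    apply (HM x (Jdom_conv _ _ _ _ _ Ha Hb Hx)).
  - apply (taylor1 (fun s => vy (gamma s))). intros x Hx.
    split; [apply smooth1_d1; auto|]. split; [apply smooth1_d2; auto|].
    apply (HM x (Jdom_conv _ _ _ _ _ Ha Hb Hx)).
  - apply (taylor1 (fun s => vz (gamma s))). intros x Hx.
    split; [apply smooth1_d1; auto|]. split; [apply smooth1_d2; auto|].
    apply (HM x (Jdom_conv _ _ _ _ _ Ha Hb Hx)).
Qed.


Lemma vsub_triang p q r : vnorm (vsub p r) <= vnorm (vsub p q) + vnorm (vsub q r).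
Proof.
  replace (vsub p r) with (vadd (vsub p q) (vsub q r)). apply triang.
  apply vec_eq; unfold vsub, vadd, vscale, mkv, vx, vy, vz; simpl; ring.
Qed.

Lemma vsub_sym p q : vnorm (vsub p q) = vnorm (vsub q p).
Proof.
  replace (vsub p q) with (vscale (-1) (vsub q p)).
  - rewrite vnorm_scale. replace (Rabs (-1)) with 1 by (rewrite Rabs_left; lra). ring.
  - apply vec_eq; unfold vsub, vadd, vscale, mkv, vx, vy, vz; simpl; ring.
Qed.

Lemma vsub_zero_eq p q : vnorm (vsub p q) = 0 -> p = q.
Proof.
  intros H. apply vnorm_zero in H. apply vec_eq.
  - pose proof (vsub_x p q). rewrite H in H0. change (vx vzero) with 0 in H0. lra.
  - pose proof (vsub_y p q). rewrite H in H0. change (vy vzero) with 0 in H0. lra.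
  - pose proof (vsub_z p q). rewrite H in H0. change (vz vzero) with 0 in H0. lra.
Qed.

Lemma loc_bilip closed l gamma : embedded_curve closed l gamma ->
  exists d8, 0 < d8 /\ forall a b, Jdom closed l a -> Jdom closed l b -> Rabs (a - b) < d8 ->
    Rabs (a - b) <= 2 * vnorm (vsub (gamma a) (gamma b)).
Proof.
  intros He. destruct (g2_bound _ _ _ He) as [M [HM1 HM]].
  exists (/ (6 * M)). split; [apply Rinv_0_lt_compat; lra|].
  intros a b Ha Hb Hd.
  destruct (taylor_g _ _ _ M He HM a b Ha Hb) as [Tx [Ty Tz]].
  pose proof (proj1 (proj2 (proj2 He)) b) as Hu.
  pose proof (unit_comp _ Hu) as [Ux [Uy Uz]]. pose proof (unit_dot _ Hu) as U1.
  set (u := Dv gamma b) in *. set (D := vsub (gamma a) (gamma b)).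
  set (d := a - b) in *.
  set (Rx := vx (gamma a) - vx (gamma b) - d * vx u) in *.
  set (Ry := vy (gamma a) - vy (gamma b) - d * vy u) in *.
  set (Rz := vz (gamma a) - vz (gamma b) - d * vz u) in *.
  assert (Edot : dot D u = d + (Rx * vx u + Ry * vy u + Rz * vz u)).
  { unfold D. unfold dot in *. rewrite vsub_x, vsub_y, vsub_z. unfold Rx, Ry, Rz. assert (d * (vx u * vx u + vy u * vy u + vz u * vz u) = d * 1) by (rewrite U1; auto). nra. }
  assert (HR : forall R0 w, Rabs R0 <= M * d ^ 2 -> Rabs w <= 1 -> Rabs (R0 * w) <= M * d ^ 2).
  { intros R0 w H1 H2. rewrite Rabs_mult.
    pose proof (Rabs_pos R0). pose proof (Rabs_pos w). nra. }
  assert (He3 : Rabs (Rx * vx u + Ry * vy u + Rz * vz u) <= 3 * (M * d ^ 2)).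
  { pose proof (HR _ _ Tx Ux). pose proof (HR _ _ Ty Uy). pose proof (HR _ _ Tz Uz).
    eapply Rle_trans; [apply Rabs_triang|].
    pose proof (Rabs_triang (Rx * vx u) (Ry * vy u)). lra. }
  assert (Hsm : 3 * (M * d ^ 2) <= Rabs d / 2).
  { rewrite <- (pow2_abs d). pose proof (Rabs_pos d).
    assert (M * Rabs d <= / 6).
    { apply Rmult_lt_compat_l with (r := M) in Hd; [|lra].
      assert (M * / (6 * M) = / 6) by (field; lra). lra. }
    nra. }
  assert (Hcs : Rabs (dot D u) <= vnorm D).
  { pose proof (CS D u). rewrite Hu in H. lra. }
  rewrite Edot in Hcs.
  pose proof (Rabs_triang (d + (Rx * vx u + Ry * vy u + Rz * vz u)) (- (Rx * vx u + Ry * vy u + Rz * vz u))).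
  replace (d + (Rx * vx u + Ry * vy u + Rz * vz u) + - (Rx * vx u + Ry * vy u + Rz * vz u)) with d in H by ring.
  rewrite Rabs_Ropp in H. lra.
Qed.

Lemma curv_pos closed l gamma : embedded_curve closed l gamma ->
  forall a, curvature gamma a <> 0 -> 0 < vnorm (Dv (Dv gamma) a).
Proof.
  intros He a Hc. pose proof (proj1 (proj2 (proj2 He))) as Hu.
  assert (E : Dv (tang gamma) a = Dv (Dv gamma) a).
  { apply vec_eq; apply Derive_ext; intros t; unfold tang; rewrite Hu; rewrite Rinv_1;
      unfold vscale, mkv, vx, vy, vz; simpl; ring. }
  unfold curvature in Hc. rewrite E, Hu in Hc.
  destruct (vnorm_pos (Dv (Dv gamma) a)) as [H|H]; auto.
  exfalso. apply Hc. rewrite <- H. field.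
Qed.

Lemma inner_pos closed l gamma : embedded_curve closed l gamma ->
  forall a p q, (forall b, p <= b <= q -> gamma a <> gamma b) ->
  exists rho, 0 < rho /\ forall b, p <= b <= q -> rho <= vnorm (vsub (gamma a) (gamma b)).
Proof.
  intros He a p q Hne.
  apply (GL p q (fun b rho => rho <= vnorm (vsub (gamma a) (gamma b)))).
  - intros; lra.
  - intros b Hb. set (d := vnorm (vsub (gamma a) (gamma b))).
    assert (Hd : 0 < d).
    { destruct (vnorm_pos (vsub (gamma a) (gamma b))) as [H|H]; auto.
      exfalso. apply (Hne b Hb). apply vsub_zero_eq. auto. }
    exists (d / 6). split; [lra|]. exists (d / 2). split; [lra|].
    intros b' Hb' Hr.
    pose proof (vsub_triang (gamma a) (gamma b') (gamma b)).
    pose proof (lip_g _ _ _ He b' b). fold d in H. lra.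
Qed.

Lemma GC_open l gamma : embedded_curve false l gamma ->
  forall delta, 0 < delta -> exists rho, 0 < rho /\ forall a b,
    Jdom false l a -> Jdom false l b -> vnorm (vsub (gamma a) (gamma b)) < rho ->
    Rabs (a - b) < delta.
Proof.
  intros He delta Hdel.
  pose proof He as [Hl [_ [_ Hinj]]]. simpl in Hinj.
  assert (Hg : exists rho, 0 < rho /\ forall a, -(l/2) <= a <= l/2 ->
     forall b, -(l/2) <= b <= l/2 -> delta <= Rabs (a - b) -> rho <= vnorm (vsub (gamma a) (gamma b))).
  { apply (GL (-(l/2)) (l/2) (fun a rho => forall b, -(l/2) <= b <= l/2 -> delta <= Rabs (a - b) ->
         rho <= vnorm (vsub (gamma a) (gamma b)))).
    - intros a r r' Hr H b Hb Hab. specialize (H b Hb Hab). lra.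
    - intros a Ha.
      destruct (inner_pos _ _ _ He a (-(l/2)) (a - delta/2)) as [r1 [Hr1 H1]].
      { intros b Hb E. apply Hinj in E; simpl; lra. }
      destruct (inner_pos _ _ _ He a (a + delta/2) (l/2)) as [r2 [Hr2 H2]].
      { intros b Hb E. apply Hinj in E; simpl; lra. }
      set (ra := Rmin r1 r2). assert (Hra : 0 < ra) by (apply Rmin_pos; auto).
      exists (Rmin (delta/2) (ra/6)). split; [apply Rmin_pos; lra|].
      exists (ra / 2). split; [lra|].
      intros a' Ha' Hr b Hb Hab.
      assert (Hr' : Rabs (a' - a) < delta / 2) by (eapply Rlt_le_trans; [apply Hr| apply Rmin_l]).
      assert (Hr'' : Rabs (a' - a) < ra / 6) by (eapply Rlt_le_trans; [apply Hr| apply Rmin_r]).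
      assert (Hb' : ra <= vnorm (vsub (gamma a) (gamma b))).
      { destruct (Rle_or_lt b (a - delta/2)).
        - eapply Rle_trans; [apply Rmin_l|]. apply H1; lra.
        - eapply Rle_trans; [apply Rmin_r|]. apply H2. split; [|lra].
          unfold Rabs in *; repeat destruct Rcase_abs; lra. }
      pose proof (vsub_triang (gamma a) (gamma a') (gamma b)).
      pose proof (lip_g _ _ _ He a a'). rewrite Rabs_minus_sym in H0. lra. }
  destruct Hg as [rho [Hrho Hg]]. exists rho. split; auto.
  intros a b Ha Hb Hn. simpl in Ha, Hb.
  destruct (Rlt_or_le (Rabs (a - b)) delta); auto.
  specialize (Hg a Ha b Hb H). lra.
Qed.


Lemma GC_closed l gamma : embedded_curve true l gamma ->
  forall delta, 0 < delta -> exists rho, 0 < rho /\ forall a b,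
    vnorm (vsub (gamma a) (gamma b)) < rho ->
    exists k : Z, Rabs (a - (b + IZR k * l)) < delta.
Proof.
  intros He delta Hdel.
  pose proof He as [Hl [_ [_ [Hp Hinj]]]].
  assert (Hg : exists rho, 0 < rho /\ forall a, 0 <= a <= l ->
     forall b, a + delta <= b <= a + l - delta -> rho <= vnorm (vsub (gamma a) (gamma b))).
  { apply (GL 0 l (fun a rho => forall b, a + delta <= b <= a + l - delta ->
         rho <= vnorm (vsub (gamma a) (gamma b)))).
    - intros a r r' Hr H b Hb. specialize (H b Hb). lra.
    - intros a Ha.
      destruct (inner_pos _ _ _ He a (a + delta/2) (a + l - delta/2)) as [r1 [Hr1 H1]].
      { intros b Hb E.
        assert (Ea : exists a', 0 <= a' < l /\ gamma a' = gamma a /\ (a' = a \/ a' = a - l)).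
        { destruct (Rlt_or_le a l).
          - exists a; repeat split; auto; lra.
          - exists 0. split; [lra|]. split; [|right; lra]. replace a with (0 + l) by lra. rewrite Hp; auto. }
        assert (Eb : exists b', 0 <= b' < l /\ gamma b' = gamma b /\ (b' = b \/ b' = b - l)).
        { destruct (Rlt_or_le b l).
          - exists b; repeat split; auto; lra.
          - exists (b - l). split; [lra|]. split; [|right; lra]. replace b with ((b - l) + l) at 2 by lra. rewrite Hp; auto. }
        destruct Ea as [a' [Ha' [Ea Ca]]]. destruct Eb as [b' [Hb' [Eb Cb]]].
        assert (a' = b') by (apply Hinj; auto; congruence). lra. }
      exists (Rmin (delta/2) (r1/6)). split; [apply Rmin_pos; lra|].
      exists (r1 / 2). split; [lra|].
      intros a' Ha' Hr b Hb.
      assert (Hr' : Rabs (a' - a) < delta / 2) by (eapply Rlt_le_trans; [apply Hr| apply Rmin_l]).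
      assert (Hr'' : Rabs (a' - a) < r1 / 6) by (eapply Rlt_le_trans; [apply Hr| apply Rmin_r]).
      assert (Hb' : r1 <= vnorm (vsub (gamma a) (gamma b))).
      { apply H1. unfold Rabs in Hr'; destruct Rcase_abs; lra. }
      pose proof (vsub_triang (gamma a) (gamma a') (gamma b)).
      pose proof (lip_g _ _ _ He a a'). rewrite Rabs_minus_sym in H0. lra. }
  destruct Hg as [rho [Hrho Hg]]. exists rho. split; auto.
  intros a b Hn.
  assert (Pg : forall (k : Z) t, gamma (t + IZR k * l) = gamma t) by (apply per_vec; auto).
  destruct (floor_rep a l Hl) as [ka Hka]. set (a0 := a - IZR ka * l) in *.
  destruct (floor_rep (b - a0) l Hl) as [kb Hkb]. set (b0 := b - IZR kb * l).
  assert (Ea : gamma a = gamma a0) by (unfold a0; replace a with ((a - IZR ka * l) + IZR ka * l) at 1 by ring; apply Pg).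
  assert (Eb : gamma b = gamma b0) by (unfold b0; replace b with ((b - IZR kb * l) + IZR kb * l) at 1 by ring; apply Pg).
  rewrite Ea, Eb in Hn.
  destruct (Rlt_or_le b0 (a0 + delta)).
  - exists (ka - kb)%Z. rewrite minus_IZR. unfold b0, a0 in *.
    replace (a - (b + (IZR ka - IZR kb) * l)) with (a - IZR ka * l - (b - IZR kb * l)) by ring.
    unfold Rabs; destruct Rcase_abs; lra.
  - destruct (Rle_or_lt b0 (a0 + l - delta)).
    + exfalso. specialize (Hg a0 ltac:(lra) b0 ltac:(lra)). lra.
    + exists (ka - kb - 1)%Z. rewrite !minus_IZR. unfold b0, a0 in *.
      replace (a - (b + (IZR ka - IZR kb - 1) * l)) with (a - IZR ka * l - (b - IZR kb * l) + l) by ring.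
      unfold Rabs; destruct Rcase_abs; lra.
Qed.


Lemma Jacc closed l y : 0 < l -> Jdom closed l y ->
  forall e, 0 < e -> exists x, Jdom closed l x /\ x <> y /\ Rabs (x - y) < e.
Proof.
  intros Hl Hy e He. destruct closed; simpl in *.
  - exists (y + e/2). repeat split; try lra. rewrite Rabs_pos_eq; lra.
  - set (m := Rmin (e/2) (l/2)). assert (0 < m) by (apply Rmin_pos; lra).
    assert (m <= e/2) by apply Rmin_l. assert (m <= l/2) by apply Rmin_r.
    destruct (Rle_or_lt y 0).
    + exists (y + m). repeat split; try lra. rewrite Rabs_pos_eq; lra.
    + exists (y - m). repeat split; try lra. rewrite Rabs_left; lra.
Qed.

Lemma comp_deriv (g : R -> R) s0 o y : ex_derive g (s0 + o * y) ->
  is_derive (fun u => g (s0 + o * u)) y (o * Derive g (s0 + o * y)).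
Proof.
  intros H. auto_derive; auto. change (fun x : R => g x) with g. ring.
Qed.

Lemma comp_exd (g : R -> R) s0 o y : ex_derive g (s0 + o * y) ->
  ex_derive (fun u => g (s0 + o * u)) y.
Proof. intros H. eexists. apply comp_deriv; auto. Qed.

Lemma Dv_comp closed l gamma s0 o y : embedded_curve closed l gamma ->
  Dv (fun u => gamma (s0 + o * u)) y = vscale o (Dv gamma (s0 + o * y)).
Proof.
  intros He. destruct (emb_smooth _ _ _ He) as [Sx [Sy Sz]].
  apply vec_eq.
  - apply is_derive_unique. apply (comp_deriv (fun s => vx (gamma s))). apply smooth1_d1; auto.
  - apply is_derive_unique. apply (comp_deriv (fun s => vy (gamma s))). apply smooth1_d1; auto.
  - apply is_derive_unique. apply (comp_deriv (fun s => vz (gamma s))). apply smooth1_d1; auto.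
Qed.

Lemma tang_comp closed l gamma s0 o y : embedded_curve closed l gamma -> (o = 1 \/ o = -1) ->
  tang (fun u => gamma (s0 + o * u)) y = vscale o (Dv gamma (s0 + o * y)).
Proof.
  intros He Ho. unfold tang. rewrite (Dv_comp closed l) by auto.
  rewrite vnorm_scale. rewrite (proj1 (proj2 (proj2 He))).
  replace (/ (Rabs o * 1)) with 1.
  - apply vec_eq; unfold vscale, mkv, vx, vy, vz; simpl; ring.
  - destruct Ho; subst; [rewrite Rabs_R1| rewrite Rabs_left by lra]; field.
Qed.

Lemma Dtang_comp closed l gamma s0 o y : embedded_curve closed l gamma -> (o = 1 \/ o = -1) ->
  Dv (tang (fun u => gamma (s0 + o * u))) y = Dv (Dv gamma) (s0 + o * y).
Proof.
  intros He Ho. destruct (emb_smooth _ _ _ He) as [Sx [Sy Sz]].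
  assert (Hoo : o * o = 1) by (destruct Ho; subst; ring).
  apply vec_eq.
  - transitivity (Derive (fun u => o * Derive (fun s => vx (gamma s)) (s0 + o * u)) y).
    + apply Derive_ext. intros t. rewrite (tang_comp closed l) by auto. reflexivity.
    + pose proof (comp_deriv _ s0 o y (smooth1_d2 _ Sx _)) as Hd.
      apply is_derive_unique.
      change (vx (Dv (Dv gamma) (s0 + o * y))) with (Derive (Derive (fun s => vx (gamma s))) (s0 + o * y)).
      replace (Derive (Derive (fun s => vx (gamma s))) (s0 + o * y)) with
        (o * (o * Derive (Derive (fun s => vx (gamma s))) (s0 + o * y))) by (rewrite <- Rmult_assoc, Hoo; ring).
      apply is_derive_scal. exact Hd.
  - transitivity (Derive (fun u => o * Derive (fun s => vy (gamma s)) (s0 + o * u)) y).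
    + apply Derive_ext. intros t. rewrite (tang_comp closed l) by auto. reflexivity.
    + pose proof (comp_deriv _ s0 o y (smooth1_d2 _ Sy _)) as Hd.
      apply is_derive_unique.
      change (vy (Dv (Dv gamma) (s0 + o * y))) with (Derive (Derive (fun s => vy (gamma s))) (s0 + o * y)).
      replace (Derive (Derive (fun s => vy (gamma s))) (s0 + o * y)) with
        (o * (o * Derive (Derive (fun s => vy (gamma s))) (s0 + o * y))) by (rewrite <- Rmult_assoc, Hoo; ring).
      apply is_derive_scal. exact Hd.
  - transitivity (Derive (fun u => o * Derive (fun s => vz (gamma s)) (s0 + o * u)) y).
    + apply Derive_ext. intros t. rewrite (tang_comp closed l) by auto. reflexivity.
    + pose proof (comp_deriv _ s0 o y (smooth1_d2 _ Sz _)) as Hd.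
      apply is_derive_unique.
      change (vz (Dv (Dv gamma) (s0 + o * y))) with (Derive (Derive (fun s => vz (gamma s))) (s0 + o * y)).
      replace (Derive (Derive (fun s => vz (gamma s))) (s0 + o * y)) with
        (o * (o * Derive (Derive (fun s => vz (gamma s))) (s0 + o * y))) by (rewrite <- Rmult_assoc, Hoo; ring).
      apply is_derive_scal. exact Hd.
Qed.

Lemma frenet_pos closed l gamma o F xi s0 alpha beta s :
  embedded_curve closed l gamma -> (forall a, Jdom closed l a -> curvature gamma a <> 0) ->
  (o = 1 \/ o = -1) -> (closed = false -> s0 = 0) ->
  (forall s, Jdom closed l s -> F s 0 = gamma (s0 + o * s)) ->
  (forall y, Jdom closed l y -> ex_derive (fun t => vx (F t 0)) y /\
      ex_derive (fun t => vy (F t 0)) y /\ ex_derive (fun t => vz (F t 0)) y) ->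
  ex_derive (Derive (fun t => vx (F t 0))) s -> ex_derive (Derive (fun t => vy (F t 0))) s ->
  ex_derive (Derive (fun t => vz (F t 0))) s ->
  Jdom closed l s ->
  xi s = vadd (vscale (cos (beta s)) (tang (fun s => F s 0) s))
           (vscale (sin (beta s)) (vadd (vscale (cos (alpha s)) (nrm (fun s => F s 0) s))
              (vscale (sin (alpha s)) (binrm (fun s => F s 0) s)))) ->
  0 < Rabs (alpha s) < PI/2 -> 0 < beta s < PI ->
  0 < dot (xi s) (Dv (Dv gamma) (s0 + o * s)).
Proof.
  intros He Hcurv Ho Hs0 HF0 Hc1 Dx Dy Dz Js Hxi Ha Hb.
  destruct (emb_smooth _ _ _ He) as [Sx [Sy Sz]].
  pose proof (proj1 He) as Hl.
  set (c := fun s => F s 0) in *. set (ct := fun u => gamma (s0 + o * u)).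
  assert (E1 : forall y, Jdom closed l y -> Dv c y = Dv ct y).
  { intros y Jy. destruct (Hc1 y Jy) as [Cx [Cy Cz]].
    apply vec_eq.
    - apply (DL (Jdom closed l) _ _ y 1); auto; try lra.
      + apply (comp_exd (fun s => vx (gamma s))). apply smooth1_d1; auto.
      + intros x Jx _. unfold c, ct. rewrite HF0; auto.
      + apply Jacc; auto.
    - apply (DL (Jdom closed l) _ _ y 1); auto; try lra.
      + apply (comp_exd (fun s => vy (gamma s))). apply smooth1_d1; auto.
      + intros x Jx _. unfold c, ct. rewrite HF0; auto.
      + apply Jacc; auto.
    - apply (DL (Jdom closed l) _ _ y 1); auto; try lra.
      + apply (comp_exd (fun s => vz (gamma s))). apply smooth1_d1; auto.
      + intros x Jx _. unfold c, ct. rewrite HF0; auto.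
      + apply Jacc; auto. }
  assert (E2 : forall y, Jdom closed l y -> tang c y = tang ct y).
  { intros y Jy. unfold tang. rewrite E1; auto. }
  assert (Hn : vnorm (Dv c s) = 1).
  { rewrite E1 by auto. unfold ct. rewrite (Dv_comp closed l) by auto. rewrite vnorm_scale.
    rewrite (proj1 (proj2 (proj2 He))). destruct Ho; subst; [rewrite Rabs_R1| rewrite Rabs_left by lra]; ring. }
  set (q := fun u => Derive (fun t => vx (F t 0)) u * Derive (fun t => vx (F t 0)) u +
                     Derive (fun t => vy (F t 0)) u * Derive (fun t => vy (F t 0)) u +
                     Derive (fun t => vz (F t 0)) u * Derive (fun t => vz (F t 0)) u).
  assert (Hq : ex_derive q s).
  { unfold q. auto_derive. repeat split; auto. }
  assert (Hqs : q s = 1).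
  { rewrite <- (unit_dot _ Hn). reflexivity. }
  assert (Hsq : ex_derive (fun u => sqrt (q u)) s).
  { destruct Hq as [dq Hdq]. eexists. apply is_derive_sqrt; [exact Hdq| lra]. }
  assert (Hsq0 : sqrt (q s) <> 0) by (rewrite Hqs, sqrt_1; lra).
  assert (Hinv : ex_derive (fun u => / sqrt (q u)) s) by (apply ex_derive_inv; auto).
  assert (E3 : Dv (tang c) s = Dv (Dv gamma) (s0 + o * s)).
  { rewrite <- (Dtang_comp closed l gamma s0 o s) by auto. fold ct.
    apply vec_eq.
    - apply (DL (Jdom closed l) _ _ s 1); auto; try lra.
      + apply (ex_derive_ext (fun u => / sqrt (q u) * Derive (fun t => vx (F t 0)) u)); [reflexivity|].
        apply ex_derive_mult; auto.
      + apply (ex_derive_ext (fun u => o * Derive (fun s => vx (gamma s)) (s0 + o * u))).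
        { intros t. unfold ct. rewrite (tang_comp closed l) by auto. reflexivity. }
        apply ex_derive_scal. apply (comp_exd (Derive (fun s => vx (gamma s)))). apply smooth1_d2; auto.
      + intros x Jx _. rewrite E2; auto.
      + apply Jacc; auto.
    - apply (DL (Jdom closed l) _ _ s 1); auto; try lra.
      + apply (ex_derive_ext (fun u => / sqrt (q u) * Derive (fun t => vy (F t 0)) u)); [reflexivity|].
        apply ex_derive_mult; auto.
      + apply (ex_derive_ext (fun u => o * Derive (fun s => vy (gamma s)) (s0 + o * u))).
        { intros t. unfold ct. rewrite (tang_comp closed l) by auto. reflexivity. }
        apply ex_derive_scal. apply (comp_exd (Derive (fun s => vy (gamma s)))). apply smooth1_d2; auto.
      + intros x Jx _. rewrite E2; auto.
      + apply Jacc; auto.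
    - apply (DL (Jdom closed l) _ _ s 1); auto; try lra.
      + apply (ex_derive_ext (fun u => / sqrt (q u) * Derive (fun t => vz (F t 0)) u)); [reflexivity|].
        apply ex_derive_mult; auto.
      + apply (ex_derive_ext (fun u => o * Derive (fun s => vz (gamma s)) (s0 + o * u))).
        { intros t. unfold ct. rewrite (tang_comp closed l) by auto. reflexivity. }
        apply ex_derive_scal. apply (comp_exd (Derive (fun s => vz (gamma s)))). apply smooth1_d2; auto.
      + intros x Jx _. rewrite E2; auto.
      + apply Jacc; auto. }
  set (a := s0 + o * s) in *.
  set (g1 := Dv gamma a). set (g2 := Dv (Dv gamma) a).
  assert (T : tang c s = vscale o g1).
  { rewrite E2 by auto. unfold ct. apply (tang_comp closed l); auto. }
  assert (Nn : nrm c s = vscale (/ vnorm g2) g2).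
  { unfold nrm. rewrite E3. reflexivity. }
  assert (Bn : binrm c s = cross (vscale o g1) (vscale (/ vnorm g2) g2)).
  { unfold binrm. rewrite T, Nn. reflexivity. }
  rewrite Hxi. fold c. rewrite T, Nn, Bn.
  set (k := / vnorm g2).
  assert (Edot : dot (vadd (vscale (cos (beta s)) (vscale o g1))
     (vscale (sin (beta s)) (vadd (vscale (cos (alpha s)) (vscale k g2))
        (vscale (sin (alpha s)) (cross (vscale o g1) (vscale k g2)))))) g2 =
     cos (beta s) * o * dot g1 g2 + sin (beta s) * cos (alpha s) * k * dot g2 g2).
  { unfold dot, vadd, vscale, cross, mkv, vx, vy, vz; simpl. ring. }
  rewrite Edot. unfold g1, g2. rewrite (orth_g12 _ _ _ He). fold g2.
  rewrite <- vnorm_sq.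
  assert (Ja : Jdom closed l a).
  { unfold a. destruct closed; simpl in *; auto. rewrite Hs0 by auto.
    destruct Ho; subst; lra. }
  assert (HN : 0 < vnorm g2) by (apply (curv_pos closed l); auto).
  assert (Hk : k * (vnorm g2 * vnorm g2) = vnorm g2) by (unfold k; field; lra).
  assert (Hsb : 0 < sin (beta s)) by (apply sin_gt_0; lra).
  assert (Hca : 0 < cos (alpha s)).
  { apply cos_gt_0; unfold Rabs in Ha; destruct Rcase_abs in Ha; lra. }
  replace (cos (beta s) * o * 0 + sin (beta s) * cos (alpha s) * k * (vnorm g2 * vnorm g2))
    with (sin (beta s) * cos (alpha s) * (k * (vnorm g2 * vnorm g2))) by ring.
  rewrite Hk. apply Rmult_lt_0_compat; [apply Rmult_lt_0_compat|]; auto.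
Qed.


Lemma neg_abs z : - Rabs z <= z.
Proof. unfold Rabs; destruct Rcase_abs; lra. Qed.

Lemma comp_pert x y x' y' e B : Rabs x <= 1 -> Rabs (x' - x) < e -> Rabs (y' - y) < e ->
  Rabs y + e <= B -> x * y - e * (B + 1) <= x' * y'.
Proof.
  intros Hx Hx' Hy' HB.
  assert (Hyb : Rabs y' <= B).
  { replace y' with (y + (y' - y)) by ring. pose proof (Rabs_triang y (y' - y)). lra. }
  assert (H1 : Rabs ((x' - x) * y') <= e * B).
  { rewrite Rabs_mult. apply Rmult_le_compat; try apply Rabs_pos; lra. }
  assert (H2 : Rabs (x * (y' - y)) <= 1 * e).
  { rewrite Rabs_mult. apply Rmult_le_compat; try apply Rabs_pos; lra. }
  pose proof (neg_abs ((x' - x) * y')). pose proof (neg_abs (x * (y' - y))).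
  replace (x' * y') with (x * y + (x' - x) * y' + x * (y' - y)) by ring. lra.
Qed.

Lemma UP_local (X Y : R -> vec3) (A : R -> R) s :
  0 < dot (X s) (Y (A s)) ->
  Rabs (vx (X s)) <= 1 -> Rabs (vy (X s)) <= 1 -> Rabs (vz (X s)) <= 1 ->
  (forall e, 0 < e -> exists d, 0 < d /\ forall s', Rabs (s' - s) < d ->
     Rabs (vx (X s') - vx (X s)) < e /\ Rabs (vy (X s') - vy (X s)) < e /\ Rabs (vz (X s') - vz (X s)) < e) ->
  (forall e, 0 < e -> exists d, 0 < d /\ forall b, Rabs (b - A s) < d ->
     Rabs (vx (Y b) - vx (Y (A s))) < e /\ Rabs (vy (Y b) - vy (Y (A s))) < e /\
     Rabs (vz (Y b) - vz (Y (A s))) < e) ->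
  (forall s', Rabs (A s' - A s) <= Rabs (s' - s)) ->
  exists r, 0 < r /\ exists rho, 0 < rho /\ forall s', Rabs (s' - s) < r ->
    forall b, Rabs (b - A s') < rho -> rho <= dot (X s') (Y b).
Proof.
  intros Hp Hx Hy Hz HX HY HA.
  set (p := dot (X s) (Y (A s))) in *.
  set (B := 1 + Rabs (vx (Y (A s))) + Rabs (vy (Y (A s))) + Rabs (vz (Y (A s)))).
  assert (HB : 1 <= B).
  { unfold B. pose proof (Rabs_pos (vx (Y (A s)))). pose proof (Rabs_pos (vy (Y (A s)))).
    pose proof (Rabs_pos (vz (Y (A s)))). lra. }
  set (e := Rmin 1 (p / (6 * (B + 1)))).
  assert (He : 0 < e) by (apply Rmin_pos; [lra| apply Rdiv_lt_0_compat; lra]).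
  assert (He1 : e <= 1) by apply Rmin_l.
  assert (He2 : e * (B + 1) <= p / 6).
  { assert (e <= p / (6 * (B + 1))) by apply Rmin_r.
    apply Rmult_le_compat_r with (r := B + 1) in H; [|lra].
    replace (p / (6 * (B + 1)) * (B + 1)) with (p / 6) in H by (field; lra). lra. }
  destruct (HX e He) as [d1 [Hd1 H1]]. destruct (HY e He) as [d2 [Hd2 H2]].
  exists (Rmin d1 (d2 / 2)). split; [apply Rmin_pos; lra|].
  exists (Rmin (p / 2) (d2 / 2)). split; [apply Rmin_pos; lra|].
  intros s' Hs' b Hb.
  assert (Hs1 : Rabs (s' - s) < d1) by (eapply Rlt_le_trans; [apply Hs'| apply Rmin_l]).
  assert (Hs2 : Rabs (s' - s) < d2 / 2) by (eapply Rlt_le_trans; [apply Hs'| apply Rmin_r]).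
  assert (Hb2 : Rabs (b - A s') < d2 / 2) by (eapply Rlt_le_trans; [apply Hb| apply Rmin_r]).
  assert (Hba : Rabs (b - A s) < d2).
  { replace (b - A s) with ((b - A s') + (A s' - A s)) by ring.
    pose proof (Rabs_triang (b - A s') (A s' - A s)). pose proof (HA s'). lra. }
  destruct (H1 s' Hs1) as [X1 [X2 X3]]. destruct (H2 b Hba) as [Y1 [Y2 Y3]].
  assert (Bx : Rabs (vx (Y (A s))) + e <= B) by (unfold B; pose proof (Rabs_pos (vy (Y (A s)))); pose proof (Rabs_pos (vz (Y (A s)))); lra).
  assert (By : Rabs (vy (Y (A s))) + e <= B) by (unfold B; pose proof (Rabs_pos (vx (Y (A s)))); pose proof (Rabs_pos (vz (Y (A s)))); lra).
  assert (Bz : Rabs (vz (Y (A s))) + e <= B) by (unfold B; pose proof (Rabs_pos (vy (Y (A s)))); pose proof (Rabs_pos (vx (Y (A s)))); lra).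
  pose proof (comp_pert _ _ _ _ _ _ Hx X1 Y1 Bx).
  pose proof (comp_pert _ _ _ _ _ _ Hy X2 Y2 By).
  pose proof (comp_pert _ _ _ _ _ _ Hz X3 Y3 Bz).
  assert (Rmin (p / 2) (d2 / 2) <= p / 2) by apply Rmin_l.
  unfold dot in *. unfold p in *. lra.
Qed.

Lemma quot_cont (f1 f0 h : R -> R) s v0 eta : 0 < v0 -> 0 < eta ->
  continuity_pt f1 s -> continuity_pt f0 s ->
  (forall s', Rabs (s' - s) < eta -> h s' = (f1 s' - f0 s') / v0) ->
  forall e, 0 < e -> exists d, 0 < d /\ forall s', Rabs (s' - s) < d -> Rabs (h s' - h s) < e.
Proof.
  intros Hv Heta C1 C0 Hh e He.
  assert (Hev : 0 < e * v0 / 2) by (apply Rdiv_lt_0_compat; [apply Rmult_lt_0_compat|]; lra).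
  destruct (cont_eps _ _ C1 (e * v0 / 2) Hev) as [d1 [Hd1 H1]].
  destruct (cont_eps _ _ C0 (e * v0 / 2) Hev) as [d0 [Hd0 H0]].
  exists (Rmin eta (Rmin d1 d0)). split; [repeat apply Rmin_pos; auto|].
  intros s' Hs'.
  assert (A1 : Rabs (s' - s) < eta) by (eapply Rlt_le_trans; [apply Hs'| apply Rmin_l]).
  assert (A2 : Rabs (s' - s) < d1) by (eapply Rlt_le_trans; [apply Hs'|]; eapply Rle_trans; [apply Rmin_r| apply Rmin_l]).
  assert (A3 : Rabs (s' - s) < d0) by (eapply Rlt_le_trans; [apply Hs'|]; eapply Rle_trans; [apply Rmin_r| apply Rmin_r]).
  rewrite (Hh s' A1), (Hh s) by (rewrite Rminus_diag, Rabs_R0; lra).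
  replace ((f1 s' - f0 s') / v0 - (f1 s - f0 s) / v0) with (((f1 s' - f1 s) - (f0 s' - f0 s)) / v0) by (field; lra).
  unfold Rdiv. rewrite Rabs_mult, Rabs_inv, (Rabs_pos_eq v0) by lra.
  apply Rmult_lt_reg_r with v0; auto. rewrite Rmult_assoc, Rinv_l, Rmult_1_r by lra.
  specialize (H1 s' A2). specialize (H0 s' A3).
  pose proof (Rabs_triang (f1 s' - f1 s) (- (f0 s' - f0 s))). rewrite Rabs_Ropp in H. replace (f1 s' - f1 s + - (f0 s' - f0 s)) with (f1 s' - f1 s - (f0 s' - f0 s)) in H by ring. lra.
Qed.


Lemma NF_facts closed l gamma o F :
  embedded_curve closed l gamma -> (forall a, Jdom closed l a -> curvature gamma a <> 0) ->
  (o = 1 \/ o = -1) -> normal_form_D closed l gamma o F ->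
  exists xi s0 dF, 0 < dF /\ (closed = false -> s0 = 0) /\
   (forall s v, Jdom closed l s -> Rabs v < dF ->
       F s v = vadd (gamma (s0 + o * s)) (vscale v (xi s))) /\
   (closed = true -> forall (k : Z) s v, F (s + IZR k * l) v = F s v) /\
   (forall s, Jdom closed l s -> vnorm (xi s) = 1) /\
   (exists m r, 0 < m /\ 0 < r /\ forall s, Jdom closed l s -> forall b,
       Rabs (b - (s0 + o * s)) < r -> m <= dot (xi s) (Dv (Dv gamma) b)).
Proof.
  intros He Hcurv Ho [xi [Hds [[s0 [Hs0 HF0]] Hfr]]].
  destruct Hds as [eta [delta [Heta [Hdelta Hds]]]]. cbv zeta in Hds, Hfr.
  destruct Hds as [Hsm [Hper [_ [_ [_ [Hrep [Hunit _]]]]]]].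
  destruct Hfr as [alpha [beta Hfr]].
  destruct Hsm as [Smx [Smy Smz]].
  pose proof (proj1 He) as Hl.
  set (Ur := fun u : R => if closed then True else - (l / 2) - eta < u < l / 2 + eta).
  assert (JU : forall s, Jdom closed l s -> Ur s).
  { intros s; unfold Ur; destruct closed; simpl; auto; lra. }
  assert (Unear : forall s s', Jdom closed l s -> Rabs (s' - s) < eta -> Ur s').
  { intros s s'; unfold Ur; destruct closed; simpl; auto. intros H1 H2.
    unfold Rabs in H2; destruct Rcase_abs in H2; lra. }
  set (v0 := delta / 2).
  assert (HU : forall u v, Ur u -> - delta < v < delta ->
     (if closed then True else - (l / 2) - eta < u < l / 2 + eta) /\ - delta < v < delta).
  { intros u v Hu Hv. split; auto. }
  assert (Hv0 : - delta < v0 < delta) by (unfold v0; lra).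
  assert (H00 : - delta < 0 < delta) by lra.
  assert (Hrepr : forall u, Ur u ->
     vx (xi u) = (vx (F u v0) - vx (F u 0)) / v0 /\
     vy (xi u) = (vy (F u v0) - vy (F u 0)) / v0 /\
     vz (xi u) = (vz (F u v0) - vz (F u 0)) / v0).
  { intros u Hu. rewrite (Hrep u v0 (HU u v0 Hu Hv0)).
    unfold vadd, vscale, mkv, vx, vy, vz; simpl. unfold v0. repeat split; field; lra. }
  exists xi, s0, delta. split; auto. split; auto.
  split.
  { intros s v Js Hv. rewrite Hrep. rewrite HF0; auto. apply HU; auto.
    unfold Rabs in Hv; destruct Rcase_abs in Hv; lra. }
  split.
  { intros Hc k s v. apply (per_vec (fun u => F u v)). intros t; apply Hper; auto. }
  split.
  { intros s Js. apply (Hunit s 0). apply HU; auto. }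
  assert (XC : forall s, Jdom closed l s -> forall e, 0 < e -> exists d, 0 < d /\ forall s',
     Rabs (s' - s) < d -> Rabs (vx (xi s') - vx (xi s)) < e /\
       Rabs (vy (xi s') - vy (xi s)) < e /\ Rabs (vz (xi s') - vz (xi s)) < e).
  { intros s Js e He0.
    assert (Hvp : 0 < v0) by (unfold v0; lra).
    destruct (quot_cont (fun t => vx (F t v0)) (fun t => vx (F t 0)) (fun u => vx (xi u)) s v0 eta Hvp Heta)
      with (e := e) as [d1 [Hd1 D1]]; auto.
    { apply exd_cont. exact (proj1 (Smx nil s v0 (HU s v0 (JU s Js) Hv0))). }
    { apply exd_cont. exact (proj1 (Smx nil s 0 (HU s 0 (JU s Js) H00))). }
    { intros s' Hs'. apply (Hrepr s' (Unear s s' Js Hs')). }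
    destruct (quot_cont (fun t => vy (F t v0)) (fun t => vy (F t 0)) (fun u => vy (xi u)) s v0 eta Hvp Heta)
      with (e := e) as [d2 [Hd2 D2]]; auto.
    { apply exd_cont. exact (proj1 (Smy nil s v0 (HU s v0 (JU s Js) Hv0))). }
    { apply exd_cont. exact (proj1 (Smy nil s 0 (HU s 0 (JU s Js) H00))). }
    { intros s' Hs'. apply (Hrepr s' (Unear s s' Js Hs')). }
    destruct (quot_cont (fun t => vz (F t v0)) (fun t => vz (F t 0)) (fun u => vz (xi u)) s v0 eta Hvp Heta)
      with (e := e) as [d3 [Hd3 D3]]; auto.
    { apply exd_cont. exact (proj1 (Smz nil s v0 (HU s v0 (JU s Js) Hv0))). }
    { apply exd_cont. exact (proj1 (Smz nil s 0 (HU s 0 (JU s Js) H00))). }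
    { intros s' Hs'. apply (Hrepr s' (Unear s s' Js Hs')). }
    exists (Rmin d1 (Rmin d2 d3)). split; [repeat apply Rmin_pos; auto|].
    intros s' Hs'. repeat split.
    - apply D1. eapply Rlt_le_trans; [apply Hs'| apply Rmin_l].
    - apply D2. eapply Rlt_le_trans; [apply Hs'|]. eapply Rle_trans; [apply Rmin_r| apply Rmin_l].
    - apply D3. eapply Rlt_le_trans; [apply Hs'|]. eapply Rle_trans; [apply Rmin_r| apply Rmin_r]. }
  destruct (emb_smooth _ _ _ He) as [Sx [Sy Sz]].
  assert (YC : forall a e, 0 < e -> exists d, 0 < d /\ forall b, Rabs (b - a) < d ->
     Rabs (vx (Dv (Dv gamma) b) - vx (Dv (Dv gamma) a)) < e /\
     Rabs (vy (Dv (Dv gamma) b) - vy (Dv (Dv gamma) a)) < e /\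
     Rabs (vz (Dv (Dv gamma) b) - vz (Dv (Dv gamma) a)) < e).
  { intros a e He0.
    destruct (cont_eps _ _ (exd_cont _ _ (smooth1_d3 _ Sx a)) e He0) as [d1 [Hd1 D1]].
    destruct (cont_eps _ _ (exd_cont _ _ (smooth1_d3 _ Sy a)) e He0) as [d2 [Hd2 D2]].
    destruct (cont_eps _ _ (exd_cont _ _ (smooth1_d3 _ Sz a)) e He0) as [d3 [Hd3 D3]].
    exists (Rmin d1 (Rmin d2 d3)). split; [repeat apply Rmin_pos; auto|].
    intros b Hb. repeat split.
    - apply D1. eapply Rlt_le_trans; [apply Hb| apply Rmin_l].
    - apply D2. eapply Rlt_le_trans; [apply Hb|]. eapply Rle_trans; [apply Rmin_r| apply Rmin_l].
    - apply D3. eapply Rlt_le_trans; [apply Hb|]. eapply Rle_trans; [apply Rmin_r| apply Rmin_r]. }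
  assert (PP : forall s, Jdom closed l s -> 0 < dot (xi s) (Dv (Dv gamma) (s0 + o * s))).
  { intros s Js. destruct (Hfr s Js) as [Hxi [Ha Hb]].
    apply (frenet_pos closed l gamma o F xi s0 alpha beta s); auto.
    - intros y Jy. repeat split.
      + exact (proj1 (Smx nil y 0 (HU y 0 (JU y Jy) H00))).
      + exact (proj1 (Smy nil y 0 (HU y 0 (JU y Jy) H00))).
      + exact (proj1 (Smz nil y 0 (HU y 0 (JU y Jy) H00))).
    - exact (proj1 (Smx (cons true nil) s 0 (HU s 0 (JU s Js) H00))).
    - exact (proj1 (Smy (cons true nil) s 0 (HU s 0 (JU s Js) H00))).
    - exact (proj1 (Smz (cons true nil) s 0 (HU s 0 (JU s Js) H00))). }
  set (P := fun s rho => forall b, Rabs (b - (s0 + o * s)) < rho -> rho <= dot (xi s) (Dv (Dv gamma) b)).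
  assert (HA : forall s s', Rabs ((s0 + o * s') - (s0 + o * s)) <= Rabs (s' - s)).
  { intros s s'. replace ((s0 + o * s') - (s0 + o * s)) with (o * (s' - s)) by ring.
    rewrite Rabs_mult. destruct Ho as [-> | ->]; [rewrite Rabs_R1| rewrite Rabs_left by lra]; lra. }
  assert (Loc : forall s, Jdom closed l s -> exists r, 0 < r /\ exists rho, 0 < rho /\ forall s', Rabs (s' - s) < r -> P s' rho).
  { intros s Js.
    destruct (unit_comp _ (Hunit s 0 (HU s 0 (JU s Js) H00))) as [ux [uy uz]].
    destruct (UP_local xi (Dv (Dv gamma)) (fun s => s0 + o * s) s (PP s Js) ux uy uz
       (XC s Js) (YC (s0 + o * s)) (HA s)) as [r [Hr [rho [Hrho H]]]].
    exists r. split; auto. exists rho. split; auto. }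
  assert (Mon : forall a r r', 0 < r' <= r -> P a r -> P a r').
  { intros a r r' Hr H b Hb. unfold P in H. specialize (H b ltac:(lra)). lra. }
  destruct closed.
  - destruct (GL 0 l P Mon) as [rho [Hrho Hg]].
    { intros a Ha. destruct (Loc a I) as [r [Hr [rho [Hrho H]]]].
      exists r. split; auto. exists rho. split; auto. }
    exists rho, rho. split; [auto|]. split; [auto|]. intros s _ b Hb.
    assert (Xp : forall t, xi (t + l) = xi t).
    { intros t. destruct (Hrepr (t + l) I) as [A1 [A2 A3]]. destruct (Hrepr t I) as [B1 [B2 B3]].
      rewrite !Hper in A1, A2, A3 by auto. apply vec_eq; congruence. }
    assert (Gp : forall t, Dv (Dv gamma) (t + l) = Dv (Dv gamma) t).
    { intros t. apply per_Dv. intros t'. apply per_Dv. apply (proj1 (proj2 (proj2 (proj2 He)))). }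
    destruct (floor_rep s l Hl) as [k Hk].
    set (s1 := s - IZR k * l) in *.
    assert (E1 : xi s = xi s1).
    { unfold s1. replace s with ((s - IZR k * l) + IZR k * l) at 1 by ring. apply per_vec; auto. }
    rewrite E1.
    destruct Ho as [-> | ->].
    + assert (E2 : Dv (Dv gamma) b = Dv (Dv gamma) (b - IZR k * l)).
      { replace b with ((b - IZR k * l) + IZR k * l) at 1 by ring. apply per_vec; auto. }
      rewrite E2. apply (Hg s1); [lra|]. unfold s1. 
      replace (b - IZR k * l - (s0 + 1 * (s - IZR k * l))) with (b - (s0 + 1 * s)) by ring. auto.
    + assert (E2 : Dv (Dv gamma) b = Dv (Dv gamma) (b + IZR k * l)).
      { replace b with ((b + IZR k * l) + IZR (- k) * l) at 1 by (rewrite opp_IZR; ring). apply per_vec; auto. }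
      rewrite E2. apply (Hg s1); [lra|]. unfold s1. 
      replace (b + IZR k * l - (s0 + -1 * (s - IZR k * l))) with (b - (s0 + -1 * s)) by ring. auto.
  - destruct (GL (-(l/2)) (l/2) P Mon) as [rho [Hrho Hg]].
    { intros a Ha. destruct (Loc a Ha) as [r [Hr [rho [Hrho H]]]].
      exists r. split; auto. exists rho. split; auto. }
    exists rho, rho. split; [auto|]. split; [auto|]. intros s Js b Hb. apply (Hg s Js b Hb).
Qed.


Lemma GC closed l gamma : embedded_curve closed l gamma ->
  forall delta, 0 < delta -> exists rho, 0 < rho /\ forall a b,
    Jdom closed l a -> Jdom closed l b -> vnorm (vsub (gamma a) (gamma b)) < rho ->
    exists b', Jdom closed l b' /\ gamma b' = gamma b /\ Dv (Dv gamma) b' = Dv (Dv gamma) b /\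
      Rabs (a - b') < delta.
Proof.
  intros He delta Hd. destruct closed.
  - destruct (GC_closed l gamma He delta Hd) as [rho [Hrho H]].
    exists rho. split; auto. intros a b _ _ Hn.
    destruct (H a b Hn) as [k Hk]. exists (b + IZR k * l).
    pose proof He as [_ [_ [_ [Hp _]]]].
    split; [simpl; auto|]. split; [apply per_vec; auto|]. split; auto.
    apply per_vec. intros t. apply per_Dv. intros t'. apply per_Dv. auto.
  - destruct (GC_open l gamma He delta Hd) as [rho [Hrho H]].
    exists rho. split; auto. intros a b Ja Jb Hn. exists b. split; [auto|]. split; [auto|]. split; [auto|]. apply H; auto.
Qed.

Lemma Jdom_a closed l s0 o s : (closed = false -> s0 = 0) -> (o = 1 \/ o = -1) ->
  Jdom closed l s -> Jdom closed l (s0 + o * s).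
Proof.
  intros H Ho Js. destruct closed; simpl in *; auto. rewrite H by auto. destruct Ho; subst; lra.
Qed.

Lemma Dabs_o closed l gamma F : normal_form_Dabs closed l gamma F ->
  exists o, (o = 1 \/ o = -1) /\ normal_form_D closed l gamma o F.
Proof. intros [H|H]; [exists 1|exists (-1)]; auto. Qed.

Theorem proposition1p11 (closed : bool) (l : R) (gamma : R -> vec3)
  (F G : R -> R -> vec3) :
  embedded_curve closed l gamma ->
  (forall s, Jdom closed l s -> curvature gamma s <> 0) ->
  normal_form_Dabs closed l gamma F ->
  normal_form_Dabs closed l gamma G ->
  exists eps0 : R, 0 < eps0 /\
    forall eps : R, 0 < eps < eps0 ->
      forall s v t w : R,
        Jdom closed l s -> 0 < v < eps ->
        Jdom closed l t -> - eps < w < 0 ->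
        F s v <> G t w.
Proof.
  intros He Hcurv HFa HGa.
  destruct (Dabs_o _ _ _ _ HFa) as [oF [HoF HF]].
  destruct (Dabs_o _ _ _ _ HGa) as [oG [HoG HG]].
  destruct (NF_facts _ _ _ _ _ He Hcurv HoF HF) as [xiF [s0F [dF [HdF [Hs0F [RepF [_ [UnF [mF [rF [HmF [HrF UPF]]]]]]]]]]]].
  destruct (NF_facts _ _ _ _ _ He Hcurv HoG HG) as [xiG [s0G [dG [HdG [Hs0G [RepG [_ [UnG [mG [rG [HmG [HrG UPG]]]]]]]]]]]].
  destruct (g2_bound _ _ _ He) as [M [HM1 HM]].
  destruct (loc_bilip _ _ _ He) as [d8 [Hd8 LB]].
  set (m := Rmin mF mG). assert (Hm : 0 < m) by (apply Rmin_pos; auto).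
  set (d1 := Rmin (Rmin rF rG) d8). assert (Hd1 : 0 < d1) by (repeat apply Rmin_pos; auto).
  destruct (GC _ _ _ He d1 Hd1) as [rho [Hrho HGC]].
  set (K := 216 * (M * M)). assert (HK : 0 < K) by (unfold K; nra).
  exists (Rmin (Rmin dF dG) (Rmin (rho / 6) (m / K))).
  split; [repeat apply Rmin_pos; try lra; apply Rdiv_lt_0_compat; lra|].
  intros eps [He0 Heps] s v t w Js Hv Jt Hw Heq.
  assert (E1 : eps < dF) by (eapply Rlt_le_trans; [apply Heps|]; eapply Rle_trans; [apply Rmin_l| apply Rmin_l]).
  assert (E2 : eps < dG) by (eapply Rlt_le_trans; [apply Heps|]; eapply Rle_trans; [apply Rmin_l| apply Rmin_r]).
  assert (E3 : eps < rho / 6) by (eapply Rlt_le_trans; [apply Heps|]; eapply Rle_trans; [apply Rmin_r| apply Rmin_l]).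
  assert (E4 : eps < m / K) by (eapply Rlt_le_trans; [apply Heps|]; eapply Rle_trans; [apply Rmin_r| apply Rmin_r]).
  set (a := s0F + oF * s). set (b := s0G + oG * t).
  assert (Ja : Jdom closed l a) by (apply Jdom_a; auto).
  assert (Jb : Jdom closed l b) by (apply Jdom_a; auto).
  rewrite RepF in Heq by (auto; rewrite Rabs_pos_eq; lra).
  rewrite RepG in Heq by (auto; rewrite Rabs_left; lra).
  fold a b in Heq.
  assert (Ex : vx (gamma a) + v * vx (xiF s) = vx (gamma b) + w * vx (xiG t)).
  { change (vx (vadd (gamma a) (vscale v (xiF s))) = vx (vadd (gamma b) (vscale w (xiG t)))). rewrite Heq; auto. }
  assert (Ey : vy (gamma a) + v * vy (xiF s) = vy (gamma b) + w * vy (xiG t)).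
  { change (vy (vadd (gamma a) (vscale v (xiF s))) = vy (vadd (gamma b) (vscale w (xiG t)))). rewrite Heq; auto. }
  assert (Ez : vz (gamma a) + v * vz (xiF s) = vz (gamma b) + w * vz (xiG t)).
  { change (vz (vadd (gamma a) (vscale v (xiF s))) = vz (vadd (gamma b) (vscale w (xiG t)))). rewrite Heq; auto. }
  destruct (unit_comp _ (UnF s Js)) as [Fx [Fy Fz]].
  destruct (unit_comp _ (UnG t Jt)) as [Gx [Gy Gz]].
  set (S := v - w). assert (HS : 0 < S) by (unfold S; lra).
  assert (Hcomp : forall p q (x y : R), Rabs p <= 1 -> Rabs q <= 1 ->
     Rabs (w * q - v * p) <= S).
  { intros p q _ _ Hp Hq. 
    pose proof (Rabs_triang (w * q) (- (v * p))). rewrite Rabs_Ropp in H.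
    rewrite !Rabs_mult in H. rewrite (Rabs_left w) in H by lra. rewrite (Rabs_pos_eq v) in H by lra.
    replace (w * q + - (v * p)) with (w * q - v * p) in H by ring.
    unfold S. pose proof (Rabs_pos p). pose proof (Rabs_pos q). nra. }
  assert (Hn : vnorm (vsub (gamma a) (gamma b)) <= 3 * S).
  { eapply Rle_trans; [apply norm_le_sum|]. rewrite vsub_x, vsub_y, vsub_z.
    replace (vx (gamma a) - vx (gamma b)) with (w * vx (xiG t) - v * vx (xiF s)) by lra.
    replace (vy (gamma a) - vy (gamma b)) with (w * vy (xiG t) - v * vy (xiF s)) by lra.
    replace (vz (gamma a) - vz (gamma b)) with (w * vz (xiG t) - v * vz (xiF s)) by lra.
    pose proof (Hcomp _ _ 0 0 Fx Gx). pose proof (Hcomp _ _ 0 0 Fy Gy). pose proof (Hcomp _ _ 0 0 Fz Gz).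
    lra. }
  destruct (HGC a b Ja Jb ltac:(unfold S in *; lra)) as [b' [Jb' [Eg [Eg2 Hab]]]].
  assert (Hab8 : Rabs (a - b') < d8) by (eapply Rlt_le_trans; [apply Hab| apply Rmin_r]).
  assert (HabF : Rabs (b' - a) < rF).
  { rewrite Rabs_minus_sym. eapply Rlt_le_trans; [apply Hab|].
    eapply Rle_trans; [apply Rmin_l| apply Rmin_l]. }
  pose proof (LB a b' Ja Jb' Hab8) as Hlb. rewrite Eg in Hlb.
  set (d := a - b') in *.
  assert (Hd6 : Rabs d <= 6 * S) by lra.
  assert (Hd2 : d ^ 2 <= 36 * (S * S)).
  { rewrite <- (pow2_abs d). pose proof (Rabs_pos d). nra. }
  destruct (taylor_g _ _ _ M He HM a b' Ja Jb') as [Tx [Ty Tz]].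
  destruct (HM b' Jb') as [Bx [By Bz]].
  fold d in Tx, Ty, Tz.
  set (g2 := Dv (Dv gamma) b') in *.
  set (g1 := Dv gamma b') in *.
  pose proof (orth_g12 _ _ _ He b') as Horth. fold g1 g2 in Horth.
  set (Rx := vx (gamma a) - vx (gamma b') - d * vx g1) in *.
  set (Ry := vy (gamma a) - vy (gamma b') - d * vy g1) in *.
  set (Rz := vz (gamma a) - vz (gamma b') - d * vz g1) in *.
  assert (XF : m <= dot (xiF s) g2).
  { eapply Rle_trans; [apply Rmin_l|]. apply UPF; auto. }
  assert (XG : m <= dot (xiG t) g2).
  { eapply Rle_trans; [apply Rmin_r|]. rewrite Eg2. apply UPG; auto.
    fold b. rewrite Rminus_diag, Rabs_R0. auto. }
  assert (Hsum : Rx * vx g2 + Ry * vy g2 + Rz * vz g2 = w * dot (xiG t) g2 - v * dot (xiF s) g2).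
  { unfold Rx, Ry, Rz. rewrite Eg.
    unfold dot in *.
    replace (vx (gamma a)) with (vx (gamma b) + w * vx (xiG t) - v * vx (xiF s)) by lra.
    replace (vy (gamma a)) with (vy (gamma b) + w * vy (xiG t) - v * vy (xiF s)) by lra.
    replace (vz (gamma a)) with (vz (gamma b) + w * vz (xiG t) - v * vz (xiF s)) by lra.
    assert (d * (vx g1 * vx g2 + vy g1 * vy g2 + vz g1 * vz g2) = d * 0) by (rewrite Horth; auto).
    nra. }
  assert (Hup : w * dot (xiG t) g2 - v * dot (xiF s) g2 <= - m * S).
  { unfold S. nra. }
  assert (HR : forall R0 y, Rabs R0 <= M * d ^ 2 -> Rabs y <= M -> - (M * M * d ^ 2) <= R0 * y).
  { intros R0 y H1 H2. pose proof (neg_abs (R0 * y)). rewrite Rabs_mult in H.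
    assert (Rabs R0 * Rabs y <= M * d ^ 2 * M).
    { apply Rmult_le_compat; try apply Rabs_pos; auto. }
    nra. }
  pose proof (HR _ _ Tx Bx). pose proof (HR _ _ Ty By). pose proof (HR _ _ Tz Bz).
  assert (Hlow : - (3 * (M * M) * (36 * (S * S))) <= - m * S).
  { assert (0 <= M * M) by nra. nra. }
  assert (HmS : m <= 108 * (M * M) * S).
  { apply Rmult_le_reg_r with S; auto. nra. }
  assert (S < 2 * eps) by (unfold S; lra).
  assert (K * eps < m).
  { apply Rmult_lt_compat_l with (r := K) in E4; auto.
    replace (K * (m / K)) with m in E4 by (field; lra). lra. }
  unfold K in *. nra.
Qed.
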